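(* Let $\mathbb{V}$ be a finite-dimensional real inner product space with inner product $\langle\cdot,\cdot\rangle$, let $\mathcal{C}\subseteq\mathbb{V}$ be a convex set, let $\mathcal{F}:\mathcal{C}\to\mathbb{V}$ be a map, and let $f:\mathcal{C}\to\mathbb{R}$ be defined by $f(x)=\langle x,\mathcal{F}(x)\rangle$. Suppose that $$\langle x,\mathcal{F}(x)-\mathcal{F}(y)\rangle\ge 0\qquad\text{for all }x,y\in\mathcal{C}.$$ Then $f$ is convex and $\mathcal{F}(x)\in\partial f(x)$ for all $x\in\mathcal{C}$.
   Context: For $x\in\mathcal{C}$, the subdifferential of $f$ at $x$ (relative to $\mathcal{C}$) is $\partial f(x)=\{g\in\mathbb{V}: f(y)\ge f(x)+\langle g,y-x\rangle \text{ for all } y\in\mathcal{C}\}$. *)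

(* Defs.v *)
From HB Require Import structures.
From mathcomp Require Import all_boot all_order all_algebra.
From mathcomp Require Import all_classical all_reals.
From mathcomp Require Import convex.
Set Implicit Arguments. Unset Strict Implicit. Unset Printing Implicit Defensive.
Import Order.TTheory GRing.Theory Num.Theory.
Local Open Scope ring_scope.
Local Open Scope classical_set_scope.

Definition is_inner_product (R : realType) (V : lmodType R)
    (ip : V -> V -> R) : Prop :=
  [/\ (forall x y, ip x y = ip y x),
      (forall a x y z, ip (a *: x + y) z = a * ip x z + ip y z),
      (forall x, 0 <= ip x x)
    & (forall x, ip x x = 0 -> x = 0)].

Definition subdifferential (R : realType) (V : lmodType R)
    (ip : V -> V -> R) (C : set V) (f : V -> R) (x : V) : set V :=
  [set g | forall y, C y -> f x + ip g (y - x) <= f y].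

(* Main.v *)
Require Import Defs.
From HB Require Import structures.
From mathcomp Require Import all_boot all_order all_algebra.
From mathcomp Require Import all_classical all_reals.
From mathcomp Require Import convex.
From mathcomp Require Import lra interval_inference.
Import IntItv.
Import Order.TTheory GRing.Theory Num.Theory.
Local Open Scope ring_scope.
Local Open Scope classical_set_scope.

Section Aux.
Variables (R : realType) (V : vectType R) (ip : V -> V -> R).
Hypothesis L : forall a x y z, ip (a *: x + y) z = a * ip x z + ip y z.

Lemma ip0 z : ip 0 z = 0.
Proof.
have := L 1 0 0 z; rewrite scaler0 addr0 mul1r => h.
lra.
Qed.

Lemma ipZ a x z : ip (a *: x) z = a * ip x z.
Proof. by have := L a x 0 z; rewrite addr0 ip0 addr0. Qed.

Lemma ipD x y z : ip (x + y) z = ip x z + ip y z.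
Proof. by have := L 1 x y z; rewrite scale1r mul1r. Qed.

Lemma ipB x y z : ip (x - y) z = ip x z - ip y z.
Proof. by rewrite ipD -scaleN1r ipZ mulN1r. Qed.
End Aux.

Theorem mainTheorem1 (R : realType) (V : vectType R) (ip : V -> V -> R)
    (C : set V) (F : V -> V) :
  is_inner_product ip ->
  convex_set (C : set (convex_lmodType V)) ->
  (forall x y, C x -> C y -> 0 <= ip x (F x - F y)) ->
  convex_function (C : set (convex_lmodType V)) (fun x : V => ip x (F x))
  /\ (forall x, C x -> subdifferential ip C (fun z : V => ip z (F z)) x (F x)).
Proof.
move=> [S L _ _] cC H.
have sub : forall x y, C x -> C y -> ip x (F x) + ip (F x) (y - x) <= ip y (F y).
  move=> x y Cx Cy; have := H y x Cy Cx.
  rewrite S ipB // ?[ip (F x) (y - x)]S ipB // [ip (F y) y]S [ip (F x) y]S; lra.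
split; last by move=> x Cx y Cy; exact: sub.
move=> t x y; rewrite !inE => Cx Cy.
set z := (conv t x y : convex_lmodType V).
have Cz : C z by have := cC x y t; rewrite !inE; apply.
have hx := sub z x Cz Cx; have hy := sub z y Cz Cy.
have ze : (z : V) = t%:inum *: x + (1 - t%:inum) *: y by [].
rewrite [ip (F z) _]S ipB // in hx; rewrite [ip (F z) _]S ipB // in hy.
have zz : ip z (F z) = t%:inum * ip x (F z) + (1 - t%:inum) * ip y (F z).
  by rewrite ze ipD // !ipZ.
have t0 : 0 <= t%:inum by [].
have t1 : t%:inum <= 1 by exact: le1.
idtac.
rewrite /conv /=; rewrite -/z; try rewrite /onem.
set a := ip z (F z) in zz hx hy *.
change (a <= t%:inum * ip x (F x) + (1 - t%:inum) * ip y (F y)).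
have h1 := ler_wpM2l t0 (_ : ip x (F z) <= ip x (F x)).
have t1' : 0 <= 1 - t%:inum by lra.
have h2 := ler_wpM2l t1' (_ : ip y (F z) <= ip y (F y)).
have := h1 ltac:(lra); have := h2 ltac:(lra); lra.
Qed.
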